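(* Identify $\mathrm{SO}(2)$ with the unit circle $\mathbb{C}_1=\{z\in\mathbb{C}:|z|=1\}$. Let $G([n],E)$ be a graph with $E=E_g\cup E_b$, let $\boldsymbol{z}^\star=(z_1^\star,\dots,z_n^\star)\in\mathbb{C}_1^n$ be unknown, and suppose we observe $z_{jk}\in\mathbb{C}_1$ for $jk\in E$ with $z_{jk}=z_j^\star\overline{z_k^\star}$ for $jk\in E_g$ and $z_{jk}$ arbitrary (adversarial) for $jk\in E_b$. Let $E^j=\{k:jk\in E\}$, $E_b^j=\{k:jk\in E_b\}$, $n_j=\#(E^j)$ and $\alpha_0=\max_j\#(E_b^j)/n_j$. Assume: $\alpha_0<1/4$; there is $c\in\mathbb{C}_1$ with $d_\angle(c,\overline{z_j^\star}z_j(0))<\pi/2$ for all $j$; and for every nonempty $J\subset[n]$ with $\#(J)\le n/2$ there is $j\in J$ with $\#\big(E^j\cap([n]\setminus J)\big)>\#\big(E^j\cap J\big)$. Let $\eta\in(0,1)$ and let $(\boldsymbol{z}(t))_{t\in\mathbb{N}}$ be generated by $\eta$-damped trimmed averaging synchronization: at time $t$, with $j=t\bmod n$, $$z_j(t+1)=\mathrm{Exp}_{z_j(t)}\Big[\eta\cdot\mathrm{ave}\Big(\mathcal{T}_{0.25}\big\{\mathrm{Log}_{z_j(t)}(z_{jk}z_k(t)):k\in E^j\big\}\Big)\Big],$$ and $z_k(t+1)=z_k(t)$ for $k\ne j$. Then $\delta(\boldsymbol{z}(t))\to 0$, i.e. the algorithm exactly recovers $\boldsymbol{z}^\star$ up to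 a global rotation. Further, if $G$ is the complete graph, $\boldsymbol{z}(t)$ converges linearly to $\boldsymbol{z}^\star$ (up to global rotation), i.e. $\delta(\boldsymbol{z}(t))\to 0$ at a geometric rate.
   Context: $\arg(e^{i\theta})=\theta\in(-\pi,\pi]$; $d_\angle(z_1,z_2)=|\arg(z_1\overline{z_2})|$. $\mathrm{Exp}_z(\theta)=e^{i\theta}z$ and $\mathrm{Log}_z(y)=\arg(y\overline{z})$ (tangent spaces identified with $\mathbb{R}$). For a finite multiset $\mathcal{X}\subset\mathbb{R}$, $\mathcal{X}_p$ is its empirical $p$-quantile, $\mathcal{T}_{0.25}\mathcal{X}=\{x\in\mathcal{X}:\mathcal{X}_{0.25}\le x\le\mathcal{X}_{0.75}\}$, and $\mathrm{ave}(\mathcal{X})$ is the arithmetic mean. $\delta(\boldsymbol{z})=\max_{jk\in E}d_\angle(\overline{z_j^\star}z_j,\overline{z_k^\star}z_k)$. *)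

(* Defs.v *)
From Stdlib Require Import Reals Lra List ClassicalEpsilon.
From Coquelicot Require Import Coquelicot.
Import ListNotations.
Open Scope R_scope.

Definition arg (z : C) : R :=
  epsilon (inhabits 0%R)
    (fun th => - PI < th <= PI /\ z = Cmult (RtoC (Cmod z)) (cos th, sin th)).

Definition dangle (z1 z2 : C) : R := Rabs (arg (Cmult z1 (Cconj z2))).

Definition ExpC (z : C) (th : R) : C := Cmult (cos th, sin th) z.
Definition LogC (z y : C) : R := arg (Cmult y (Cconj z)).

Definition Rleb (x y : R) : bool := if Rle_dec x y then true else false.

(* Empirical p-quantile of a finite multiset X (a list):
   X_p = min { x in X : #{y in X : y <= x} >= p * #X }  (= inf{x : F_X(x) >= p}). *)
Definition count_le (x : R) (X : list R) : nat :=
  length (filter (fun y => Rleb y x) X).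

Definition quantile (p : R) (X : list R) : R :=
  match filter (fun x => Rleb (p * INR (length X)) (INR (count_le x X))) X with
  | [] => 0
  | x :: r => fold_right Rmin x r
  end.

Definition trim25 (X : list R) : list R :=
  filter (fun x => Rleb (quantile (1/4) X) x && Rleb x (quantile (3/4) X))%bool X.

(* arithmetic mean (0 for the empty list, never used) *)
Definition ave (X : list R) : R := fold_right Rplus 0 X / INR (length X).

(* vertex set [n] = {0,...,n-1}; graph given by a boolean edge relation *)
Definition vertices (n : nat) : list nat := seq 0 n.
Definition nbrs (n : nat) (E : nat -> nat -> bool) (j : nat) : list nat :=
  filter (E j) (vertices n).

Definition alpha0 (n : nat) (E Eb : nat -> nat -> bool) : R :=
  fold_right Rmax 0
    (map (fun j => INR (length (nbrs n Eb j)) / INR (length (nbrs n E j)))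
         (vertices n)).

Definition delta (n : nat) (E : nat -> nat -> bool) (zstar z : nat -> C) : R :=
  fold_right Rmax 0
    (flat_map (fun j =>
       map (fun k => dangle (Cmult (Cconj (zstar j)) (z j))
                             (Cmult (Cconj (zstar k)) (z k)))
           (nbrs n E j))
       (vertices n)).

Definition sync_step (n : nat) (E : nat -> nat -> bool) (zobs : nat -> nat -> C)
    (eta : R) (t : nat) (z : nat -> C) : nat -> C :=
  let j := Nat.modulo t n in
  fun i =>
    if Nat.eqb i j then
      ExpC (z j)
        (eta * ave (trim25 (map (fun k => LogC (z j) (Cmult (zobs j k) (z k)))
                                (nbrs n E j))))
    else z i.

Fixpoint sync_traj (n : nat) (E : nat -> nat -> bool) (zobs : nat -> nat -> C)
    (eta : R) (z0 : nat -> C) (t : nat) : nat -> C :=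
  match t with
  | O => z0
  | S t' => sync_step n E zobs eta t' (sync_traj n E zobs eta z0 t')
  end.

(* Main.v *)
Require Import Defs.
From Stdlib Require Import Reals List Lra Lia Classical ClassicalEpsilon.
From Coquelicot Require Import Coquelicot.
Import ListNotations.
Open Scope R_scope.

Lemma Rleb_true a b : Rleb a b = true <-> a <= b.
Proof. unfold Rleb; destruct (Rle_dec a b); split; intros; auto; try lra; discriminate. Qed.
Lemma Rleb_false a b : Rleb a b = false <-> b < a.
Proof. unfold Rleb; destruct (Rle_dec a b); split; intros; auto; try lra; try discriminate.
 Qed.

Lemma fold_min_in x r : In (fold_right Rmin x r) (x :: r).
Proof.
  induction r as [|a r IH]; simpl; auto.
  destruct (Rle_dec a (fold_right Rmin x r)).
  - rewrite Rmin_left; auto.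
  - rewrite Rmin_right; [|lra]. destruct IH as [H|H]; auto.
Qed.
Lemma fold_min_le x r : forall y, In y (x :: r) -> fold_right Rmin x r <= y.
Proof.
  induction r as [|a r IH]; simpl; intros y Hy.
  - destruct Hy as [<-|[]]; lra.
  - destruct Hy as [Hy|[Hy|Hy]].
    + specialize (IH y (or_introl Hy)). eapply Rle_trans; [apply Rmin_r|]; auto.
    + subst; apply Rmin_l.
    + specialize (IH y (or_intror Hy)). eapply Rle_trans; [apply Rmin_r|]; auto.
Qed.

Lemma list_max_ex (l : list R) : l <> [] -> exists y, In y l /\ forall x, In x l -> x <= y.
Proof.
  induction l as [|a l IH]; intros H; [congruence|].
  destruct l as [|b l'].
  - exists a; simpl; split; auto. intros x [<-|[]]; lra.
  - destruct IH as [y [Hy1 Hy2]]; [discriminate|].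
    destruct (Rle_dec a y).
    + exists y; split; [right; auto|]. intros x [<-|Hx]; auto.
    + exists a; split; [left; auto|]. intros x [<-|Hx]; [lra|]. specialize (Hy2 x Hx); lra.
Qed.

Lemma cnt_mono {A} (f g : A -> bool) l :
  (forall x, In x l -> f x = true -> g x = true) ->
  (length (filter f l) <= length (filter g l))%nat.
Proof.
  induction l as [|a l IH]; simpl; intros H; auto.
  destruct (f a) eqn:Ef.
  - rewrite (H a (or_introl eq_refl) Ef); simpl.
    apply le_n_S, IH; intros; apply H; auto.
  - destruct (g a); simpl; [apply le_S|]; apply IH; intros; apply H; auto.
Qed.

Lemma cnt_all {A} (f : A -> bool) l :
  (forall x, In x l -> f x = true) -> length (filter f l) = length l.
Proof.
  induction l as [|a l IH]; simpl; intros H; auto.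
  rewrite (H a (or_introl eq_refl)); simpl; rewrite IH; auto.
Qed.

Lemma cnt_compl {A} (f : A -> bool) l :
  (length (filter f l) + length (filter (fun x => negb (f x)) l))%nat = length l.
Proof. apply filter_length. Qed.

Section Quant.
Variable X : list R.
Variable p : R.
Hypothesis Hp : 0 < p <= 1.
Hypothesis HX : X <> [].

Lemma quantile_spec :
  In (quantile p X) X /\ p * INR (length X) <= INR (count_le (quantile p X) X) /\
  forall y, In y X -> p * INR (length X) <= INR (count_le y X) -> quantile p X <= y.
Proof.
  unfold quantile.
  set (F := filter _ X).
  assert (HF : F <> []).
  { destruct (list_max_ex X HX) as [y [Hy1 Hy2]].
    assert (In y F).
    { unfold F; apply filter_In; split; auto. apply Rleb_true.
      unfold count_le; rewrite cnt_all.
      - assert (0 <= INR (length X)) by apply pos_INR. nra.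
      - intros x Hx; apply Rleb_true; auto. }
    destruct F; simpl in *; [contradiction|discriminate]. }
  destruct F as [|x r] eqn:EF; [congruence|].
  pose proof (fold_min_in x r) as Hin.
  rewrite <- EF in Hin. unfold F in Hin. apply filter_In in Hin as [Hin1 Hin2].
  apply Rleb_true in Hin2.
  split; [auto|split; [auto|]].
  intros y Hy Hc. apply fold_min_le. rewrite <- EF. unfold F. apply filter_In; split; auto.
  apply Rleb_true; auto.
Qed.

Lemma quantile_le_count y :
  0 < p * INR (length X) -> p * INR (length X) <= INR (count_le y X) -> quantile p X <= y.
Proof.
  intros Hpos Hc.
  set (Y := filter (fun x => Rleb x y) X).
  assert (HY : Y <> []).
  { intros E. unfold count_le in Hc. fold Y in Hc. rewrite E in Hc. simpl in Hc. lra. }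
  destruct (list_max_ex Y HY) as [w [Hw1 Hw2]].
  unfold Y in Hw1; apply filter_In in Hw1 as [Hw1 Hw3]. apply Rleb_true in Hw3.
  assert (count_le w X = count_le y X).
  { unfold count_le; f_equal; apply filter_ext_in. intros a Ha.
    destruct (Rleb a y) eqn:E1.
    - apply Rleb_true; apply Hw2; unfold Y; apply filter_In; auto.
    - apply Rleb_false in E1. apply Rleb_false. lra. }
  destruct quantile_spec as [_ [_ H3]].
  eapply Rle_trans; [apply (H3 w); auto; rewrite H; auto|]; auto.
Qed.
End Quant.

Lemma sum_le_hi l hi x0 : (forall x, In x l -> x <= hi) -> In x0 l ->
  fold_right Rplus 0 l <= (INR (length l) - 1) * hi + x0.
Proof.
  induction l as [|a l IH]; intros H Hx; [contradiction|].
  change (length (a::l)) with (S (length l)); rewrite S_INR; cbn [fold_right In] in *.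
  destruct Hx as [<-|Hx].
  - assert (fold_right Rplus 0 l <= INR (length l) * hi).
    { clear IH. induction l as [|b l IH2]; [simpl; lra|].
      change (length (b::l)) with (S (length l)); rewrite S_INR; cbn [fold_right In] in *.
      assert (b <= hi) by (apply H; simpl; auto).
      assert (fold_right Rplus 0 l <= INR (length l) * hi) by (apply IH2; intros; apply H; simpl in *; tauto).
      lra. }
    lra.
  - assert (a <= hi) by (apply H; simpl; auto).
    assert (fold_right Rplus 0 l <= (INR (length l) - 1) * hi + x0) by (apply IH; auto).
    lra.
Qed.

Lemma sum_ge_lo l lo x0 : (forall x, In x l -> lo <= x) -> In x0 l ->
  (INR (length l) - 1) * lo + x0 <= fold_right Rplus 0 l.
Proof.
  intros H Hx.
  assert (Hm : forall x, In x (map Ropp l) -> x <= - lo).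
  { intros x Hx'. apply in_map_iff in Hx' as [y [<- Hy]]. specialize (H y Hy); lra. }
  pose proof (sum_le_hi (map Ropp l) (-lo) (-x0) Hm (in_map Ropp l x0 Hx)).
  rewrite length_map in H0.
  assert (forall l, fold_right Rplus 0 (map Ropp l) = - fold_right Rplus 0 l).
  { induction l0; simpl; [lra|]. rewrite IHl0; lra. }
  rewrite H1 in H0. lra.
Qed.

Lemma sum_bounds l lo hi : (forall x, In x l -> lo <= x <= hi) ->
  INR (length l) * lo <= fold_right Rplus 0 l <= INR (length l) * hi.
Proof.
  induction l as [|a l IH]; intros H; [simpl; lra|].
  change (length (a::l)) with (S (length l)); rewrite S_INR; cbn [fold_right In] in *.
  assert (lo <= a <= hi) by (apply H; auto).
  assert (INR (length l) * lo <= fold_right Rplus 0 l <= INR (length l) * hi) by (apply IH; auto).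
  lra.
Qed.

Section Trim.
Variable X : list R.
Hypothesis HX : X <> [].
Let d := INR (length X).
Let q1 := quantile (1/4) X.
Let q3 := quantile (3/4) X.

Lemma d_pos : 0 < d.
Proof. unfold d. destruct X; [congruence|]. change (length (r::l)) with (S (length l)). rewrite S_INR. pose proof (pos_INR (length l)); lra. Qed.


Lemma spec1 : In q1 X /\ 1/4 * d <= INR (count_le q1 X) /\
  forall y, In y X -> 1/4 * d <= INR (count_le y X) -> q1 <= y.
Proof. exact (quantile_spec X (1/4) ltac:(lra) HX). Qed.
Lemma spec3 : In q3 X /\ 3/4 * d <= INR (count_le q3 X) /\
  forall y, In y X -> 3/4 * d <= INR (count_le y X) -> q3 <= y.
Proof. exact (quantile_spec X (3/4) ltac:(lra) HX). Qed.

Lemma q1_le_q3 : q1 <= q3.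
Proof.
  destruct spec1 as [_ [_ H1]]. destruct spec3 as [H3 [H3' _]].
  apply H1; auto. pose proof d_pos. lra.
Qed.

Lemma trim_mem x : In x (trim25 X) <-> In x X /\ q1 <= x <= q3.
Proof.
  unfold trim25. fold q1 q3. rewrite filter_In. rewrite Bool.andb_true_iff, !Rleb_true. tauto.
Qed.

Lemma q1_trim : In q1 (trim25 X).
Proof. apply trim_mem. pose proof q1_le_q3. destruct spec1 as [Hq _]. split; auto; lra. Qed.
Lemma q3_trim : In q3 (trim25 X).
Proof. apply trim_mem. pose proof q1_le_q3. destruct spec3 as [Hq _]. split; auto; lra. Qed.

Lemma Q_lo lo : INR (length (filter (fun x => negb (Rleb lo x)) X)) < d / 4 -> lo <= q1.
Proof.
  intros H. destruct (Rle_dec lo q1) as [|Hn]; auto. exfalso.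
  destruct spec1 as [_ [Hc _]].
  assert (count_le q1 X <= length (filter (fun x => negb (Rleb lo x)) X))%nat.
  { unfold count_le; apply cnt_mono. intros x _ Hx. apply Rleb_true in Hx.
    apply Bool.negb_true_iff, Rleb_false. lra. }
  apply le_INR in H0. lra.
Qed.

Lemma Q_hi hi : INR (length (filter (fun x => negb (Rleb x hi)) X)) < d / 4 -> q3 <= hi.
Proof.
  intros H. unfold q3. apply quantile_le_count; auto; [lra| pose proof d_pos; fold d; lra|].
  fold d. pose proof (cnt_compl (fun x => Rleb x hi) X) as Hc.
  unfold count_le. apply (f_equal INR) in Hc. rewrite plus_INR in Hc. fold d in Hc. lra.
Qed.

Lemma Q_L L : d / 4 <= INR (count_le L X) -> q1 <= L.
Proof.
  intros H. unfold q1. apply quantile_le_count; auto; [lra| pose proof d_pos; fold d; lra|].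
  fold d; lra.
Qed.

Lemma Q_U U : d / 4 < INR (length (filter (fun x => Rleb U x) X)) -> U <= q3.
Proof.
  intros H. destruct (Rle_dec U q3) as [|Hn]; auto. exfalso.
  destruct spec3 as [_ [Hc _]].
  assert (count_le q3 X <= length (filter (fun x => negb (Rleb U x)) X))%nat.
  { unfold count_le; apply cnt_mono. intros x _ Hx. apply Rleb_true in Hx.
    apply Bool.negb_true_iff, Rleb_false. lra. }
  apply le_INR in H0.
  pose proof (cnt_compl (fun x => Rleb U x) X) as Hc2.
  apply (f_equal INR) in Hc2. rewrite plus_INR in Hc2. fold d in Hc2. lra.
Qed.

Let T := trim25 X.
Lemma T_len : 1 <= INR (length T) <= d.
Proof.
  split.
  - pose proof q1_trim. fold T in H. destruct T; [contradiction|].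
    change (length (r::l)) with (S (length l)). rewrite S_INR. pose proof (pos_INR (length l)); lra.
  - apply le_INR. unfold T, trim25. apply filter_length_le.
Qed.

Lemma trim_bounds lo hi :
  INR (length (filter (fun x => negb (Rleb lo x)) X)) < d / 4 ->
  INR (length (filter (fun x => negb (Rleb x hi)) X)) < d / 4 ->
  lo <= ave T <= hi.
Proof.
  intros H1 H2. pose proof (Q_lo lo H1). pose proof (Q_hi hi H2).
  assert (forall x, In x T -> lo <= x <= hi).
  { intros x Hx. apply trim_mem in Hx. lra. }
  pose proof (sum_bounds T lo hi H3). pose proof T_len.
  unfold ave. split.
  - apply Rmult_le_reg_r with (INR (length T)); [lra|].
    unfold Rdiv. rewrite Rmult_assoc, Rinv_l; lra.
  - apply Rmult_le_reg_r with (INR (length T)); [lra|].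
    unfold Rdiv. rewrite Rmult_assoc, Rinv_l; lra.
Qed.

Lemma trim_up hi L :
  INR (length (filter (fun x => negb (Rleb x hi)) X)) < d / 4 ->
  d / 4 <= INR (count_le L X) -> L <= hi ->
  ave T <= hi - (hi - L) / d.
Proof.
  intros H1 H2 HL. pose proof (Q_hi hi H1). pose proof (Q_L L H2).
  assert (forall x, In x T -> x <= hi).
  { intros x Hx. apply trim_mem in Hx. lra. }
  pose proof (sum_le_hi T hi q1 H3 q1_trim). pose proof T_len. pose proof d_pos.
  unfold ave. set (a := INR (length T)) in *. set (s := fold_right Rplus 0 T) in *.
  assert (s / a <= hi - (hi - q1) / a).
  { apply Rmult_le_reg_r with a; [lra|].
    unfold Rdiv. rewrite Rmult_assoc, Rinv_l by lra. rewrite Rmult_minus_distr_r, Rmult_assoc, Rinv_l by lra. lra. }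
  assert ((hi - L) / d <= (hi - q1) / a).
  { apply Rle_trans with ((hi - L) / a).
    - unfold Rdiv. apply Rmult_le_compat_l; [lra|]. apply Rinv_le_contravar; lra.
    - unfold Rdiv. apply Rmult_le_compat_r; [left; apply Rinv_0_lt_compat; lra|]. lra. }
  lra.
Qed.

Lemma trim_down lo U :
  INR (length (filter (fun x => negb (Rleb lo x)) X)) < d / 4 ->
  d / 4 < INR (length (filter (fun x => Rleb U x) X)) -> lo <= U ->
  lo + (U - lo) / d <= ave T.
Proof.
  intros H1 H2 HL. pose proof (Q_lo lo H1). pose proof (Q_U U H2).
  assert (forall x, In x T -> lo <= x).
  { intros x Hx. apply trim_mem in Hx. lra. }
  pose proof (sum_ge_lo T lo q3 H3 q3_trim). pose proof T_len. pose proof d_pos.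
  unfold ave. set (a := INR (length T)) in *. set (s := fold_right Rplus 0 T) in *.
  assert (lo + (q3 - lo) / a <= s / a).
  { apply Rmult_le_reg_r with a; [lra|].
    unfold Rdiv. rewrite (Rmult_assoc s), Rinv_l by lra. rewrite Rmult_plus_distr_r, Rmult_assoc, Rinv_l by lra. lra. }
  assert ((U - lo) / d <= (q3 - lo) / a).
  { apply Rle_trans with ((U - lo) / a).
    - unfold Rdiv. apply Rmult_le_compat_l; [lra|]. apply Rinv_le_contravar; lra.
    - unfold Rdiv. apply Rmult_le_compat_r; [left; apply Rinv_0_lt_compat; lra|]. lra. }
  lra.
Qed.

Lemma trim_hi hi :
  INR (length (filter (fun x => negb (Rleb x hi)) X)) < d / 4 -> ave T <= hi.
Proof.
  intros H1. pose proof (Q_hi hi H1).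
  assert (forall x, In x T -> x <= hi).
  { intros x Hx. apply trim_mem in Hx. lra. }
  pose proof (sum_le_hi T hi q1 H0 q1_trim). pose proof T_len. pose proof q1_le_q3.
  unfold ave. set (a := INR (length T)) in *. set (s := fold_right Rplus 0 T) in *.
  apply Rmult_le_reg_r with a; [lra|].
  unfold Rdiv. rewrite Rmult_assoc, Rinv_l by lra. lra.
Qed.

Lemma trim_lo lo :
  INR (length (filter (fun x => negb (Rleb lo x)) X)) < d / 4 -> lo <= ave T.
Proof.
  intros H1. pose proof (Q_lo lo H1).
  assert (forall x, In x T -> lo <= x).
  { intros x Hx. apply trim_mem in Hx. lra. }
  pose proof (sum_ge_lo T lo q3 H0 q3_trim). pose proof T_len. pose proof q1_le_q3.
  unfold ave. set (a := INR (length T)) in *. set (s := fold_right Rplus 0 T) in *.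
  apply Rmult_le_reg_r with a; [lra|].
  unfold Rdiv. rewrite Rmult_assoc, Rinv_l by lra. lra.
Qed.
End Trim.

Lemma cnt_strict {A} (f g : A -> bool) l :
  (forall x, In x l -> f x = true -> g x = true) ->
  (exists x, In x l /\ g x = true /\ f x = false) ->
  (length (filter f l) < length (filter g l))%nat.
Proof.
  induction l as [|a l IH]; simpl; intros H [x [Hx [Hg Hf]]]; [contradiction|].
  destruct Hx as [<-|Hx].
  - rewrite Hg, Hf; simpl. apply Nat.lt_succ_r. apply cnt_mono. intros; apply H; auto.
  - assert (length (filter f l) < length (filter g l))%nat.
    { apply IH; [intros; apply H; auto| exists x; auto]. }
    destruct (f a) eqn:Ef.
    + rewrite (H a (or_introl eq_refl) Ef); simpl; lia.
    + destruct (g a); simpl; lia.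
Qed.

Lemma cnt_zero {A} (f : A -> bool) l :
  length (filter f l) = 0%nat -> forall x, In x l -> f x = false.
Proof.
  intros H x Hx. destruct (f x) eqn:E; auto.
  assert (In x (filter f l)) by (apply filter_In; auto).
  destruct (filter f l); simpl in *; [contradiction|discriminate].
Qed.

Lemma in_vertices n k : In k (vertices n) <-> (k < n)%nat.
Proof. unfold vertices. rewrite in_seq. lia. Qed.

Lemma mod_block n b j : (j < n)%nat -> ((n * b + j) mod n = j)%nat.
Proof.
  intros H. rewrite Nat.add_comm, Nat.mul_comm. rewrite Nat.Div0.mod_add. apply Nat.mod_small; auto.
Qed.

Section Propag.
Variable n : nat.
Hypothesis Hn : (0 < n)%nat.
Variable E : nat -> nat -> bool.
Variable eta : R.
Hypothesis Heta : 0 < eta < 1.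
Variable th : nat -> nat -> R.
Hypothesis step_up : forall t M, (forall k, (k < n)%nat -> th t k <= M) ->
  forall k, (k < n)%nat -> th (S t) k <= (1 - eta) * th t k + eta * M.
Hypothesis prog_up : forall t M L (P : nat -> bool),
  (forall k, (k < n)%nat -> th t k <= M) -> L <= M ->
  (forall k, (k < n)%nat -> P k = true -> th t k <= L) ->
  (length (nbrs n E (t mod n)) < 2 * length (filter P (nbrs n E (t mod n))))%nat ->
  th (S t) (t mod n) <= M - eta * (M - L) / INR n.
Hypothesis Hcut : forall J : nat -> bool,
      (exists j, (j < n)%nat /\ J j = true) ->
      (2 * length (filter J (vertices n)) <= n)%nat ->
      exists j, (j < n)%nat /\ J j = true /\
        (length (filter (fun k => J k) (nbrs n E j))
         < length (filter (fun k => negb (J k)) (nbrs n E j)))%nat.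

Lemma decay s : forall t M, (forall k, (k < n)%nat -> th t k <= M) ->
  (forall k, (k < n)%nat -> th (t + s)%nat k <= M) /\
  forall k, (k < n)%nat -> (1 - eta) ^ s * (M - th t k) <= M - th (t + s)%nat k.
Proof.
  induction s as [|s IH]; intros t M H.
  - rewrite Nat.add_0_r. split; auto. intros; simpl; lra.
  - destruct (IH t M H) as [H1 H2].
    replace (t + S s)%nat with (S (t + s)) by lia.
    split.
    + intros k Hk. pose proof (step_up _ _ H1 k Hk). pose proof (H1 k Hk). nra.
    + intros k Hk. pose proof (step_up _ _ H1 k Hk). pose proof (H2 k Hk).
      simpl. assert (0 <= M - th t k) by (pose proof (H k Hk); lra).
      assert (0 <= (1-eta)^s) by (apply pow_le; lra). nra.
Qed.

Let gam := eta * (1 - eta) ^ n / INR n.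

Lemma INR_n_ge1 : 1 <= INR n.
Proof. apply (le_INR 1); lia. Qed.

Lemma gam_le1 G : 0 <= G -> gam * G <= (1 - eta) ^ n * G.
Proof.
  intros HG. unfold gam. pose proof INR_n_ge1.
  assert (0 <= (1-eta)^n) by (apply pow_le; lra).
  assert (eta / INR n <= 1).
  { apply Rmult_le_reg_r with (INR n); [lra|]. unfold Rdiv; rewrite Rmult_assoc, Rinv_l; lra. }
  replace (eta * (1 - eta) ^ n / INR n) with ((eta / INR n) * (1-eta)^n) by (unfold Rdiv; ring).
  apply Rmult_le_compat_r; auto. nra.
Qed.

Lemma round b M G J :
  (forall k, (k < n)%nat -> th (n * b) k <= M) -> 0 <= G ->
  (forall k, (k < n)%nat -> J k = false -> G <= M - th (n * b) k) ->
  (2 * length (filter J (vertices n)) <= n)%nat ->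
  exists J', (length (filter J' (vertices n)) <= length (filter J (vertices n)) - 1)%nat /\
    forall k, (k < n)%nat -> J' k = false -> gam * G <= M - th (n * (S b)) k.
Proof.
  intros HM HG HJ Hc.
  replace (n * S b)%nat with (n * b + n)%nat by lia.
  destruct (decay n (n*b) M HM) as [_ Hd].
  assert (Hpow : 0 <= (1 - eta)^n) by (apply pow_le; lra).
  destruct (classic (exists j, (j < n)%nat /\ J j = true)) as [Hex|Hno].
  - destruct (Hcut J Hex Hc) as [j [Hj [HJj Hcnt]]].
    exists (fun k => andb (J k) (negb (Nat.eqb k j))).
    split.
    + assert (length (filter (fun k => andb (J k) (negb (Nat.eqb k j))) (vertices n)) <
              length (filter J (vertices n)))%nat.
      { apply cnt_strict.
        - intros x _ Hx. apply Bool.andb_true_iff in Hx; tauto.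
        - exists j. split; [apply in_vertices; auto|]. split; auto.
          rewrite Nat.eqb_refl. apply Bool.andb_false_r. }
      lia.
    + destruct (decay j (n*b) M HM) as [Hs1 Hs2].
      set (s := (n * b + j)%nat) in *.
      assert (Hsm : (s mod n)%nat = j) by (apply mod_block; auto).
      set (L := M - (1 - eta) ^ j * G).
      assert (HpjG : 0 <= (1 - eta) ^ j) by (apply pow_le; lra).
      assert (Hup : th (S s) j <= M - eta * (M - L) / INR n).
      { rewrite <- Hsm. apply prog_up with (P := fun k => negb (J k)); auto.
        - unfold L. nra.
        - intros k Hk HP. apply Bool.negb_true_iff in HP.
          pose proof (Hs2 k Hk). pose proof (HJ k Hk HP). unfold L. nra.
        - rewrite Hsm. pose proof (filter_length (fun k => J k) (nbrs n E j)). lia. }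
      destruct (decay (n - j - 1) (S s) M) as [_ Hd2].
      { intros k Hk. destruct (Nat.eq_dec k j) as [->|Hkj].
        - rewrite <- Hsm. apply Rle_trans with ((1 - eta) * th s (s mod n) + eta * M).
          + apply step_up; auto. rewrite Hsm; auto.
          + rewrite Hsm. pose proof (Hs1 j Hj). nra.
        - pose proof (step_up s M Hs1 k Hk). pose proof (Hs1 k Hk). nra. }
      replace (S s + (n - j - 1))%nat with (n * b + n)%nat in Hd2 by (unfold s; lia).
      intros k Hk HJ'.
      apply Bool.andb_false_iff in HJ'. destruct HJ' as [HJk|Hkj].
      * pose proof (HJ k Hk HJk). pose proof (Hd k Hk). pose proof (gam_le1 G HG). nra.
      * apply Bool.negb_false_iff, Nat.eqb_eq in Hkj. subst k.
        pose proof (Hd2 j Hj).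
        assert (Hp2 : 0 <= (1 - eta) ^ (n - j - 1)) by (apply pow_le; lra).
        assert (eta * (M - L) / INR n <= M - th (S s) j) by lra.
        unfold L in H0. replace (M - (M - (1 - eta) ^ j * G)) with ((1 - eta) ^ j * G) in H0 by ring.
        assert ((1 - eta) ^ (n - j - 1) * (eta * ((1 - eta) ^ j * G) / INR n) <= M - th (n * b + n)%nat j).
        { eapply Rle_trans; [|apply H]. apply Rmult_le_compat_l; auto. }
        eapply Rle_trans; [|apply H1].
        unfold gam.
        replace ((1 - eta) ^ (n - j - 1) * (eta * ((1 - eta) ^ j * G) / INR n))
          with (eta * ((1 - eta) ^ (n - j - 1) * (1 - eta) ^ j) * G / INR n) by (unfold Rdiv; ring).
        rewrite <- pow_add. replace (n - j - 1 + j)%nat with (n - 1)%nat by lia.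
        replace n with (S (n - 1)) at 1 by lia. simpl pow.
        pose proof INR_n_ge1.
        assert (0 <= (1 - eta) ^ (n - 1)) by (apply pow_le; lra).
        assert (Hiv : 0 < / INR n) by (apply Rinv_0_lt_compat; lra).
        unfold Rdiv.
        replace (eta * ((1 - eta) * (1 - eta) ^ (n - 1)) * / INR n * G) with
          ((eta * G * / INR n) * ((1 - eta) * (1 - eta) ^ (n - 1))) by ring.
        replace (eta * (1 - eta) ^ (n - 1) * G * / INR n) with
          ((eta * G * / INR n) * ((1 - eta) ^ (n - 1))) by ring.
        apply Rmult_le_compat_l.
        { apply Rmult_le_pos; [nra|lra]. }
        nra.
  - exists J. split.
    + assert (length (filter J (vertices n)) = 0%nat).
      { apply Nat.le_0_r. eapply Nat.le_trans; [apply (cnt_mono J (fun _ => false))|].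
        - intros x Hx HJx. exfalso. apply Hno. exists x. split; auto. apply in_vertices; auto.
        - clear. induction (vertices n); simpl; auto. }
      lia.
    + intros k Hk HJk. pose proof (HJ k Hk HJk). pose proof (Hd k Hk). pose proof (gam_le1 G HG). nra.
Qed.

Lemma rounds b M G0 J0 :
  (forall k, (k < n)%nat -> th (n * b) k <= M) -> 0 <= G0 ->
  (forall k, (k < n)%nat -> J0 k = false -> G0 <= M - th (n * b) k) ->
  (2 * length (filter J0 (vertices n)) <= n)%nat ->
  forall r, exists J, (length (filter J (vertices n)) <= length (filter J0 (vertices n)) - r)%nat /\
    forall k, (k < n)%nat -> J k = false -> gam ^ r * G0 <= M - th (n * (b + r)) k.
Proof.
  intros HM HG HJ Hc r. induction r as [|r IH].
  - exists J0. split; [lia|]. rewrite Nat.add_0_r. intros; simpl; rewrite Rmult_1_l; auto.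
  - destruct IH as [J [H1 H2]].
    assert (HM' : forall k, (k < n)%nat -> th (n * (b + r)) k <= M).
    { replace (n * (b + r))%nat with (n * b + n * r)%nat by lia. apply decay; auto. }
    assert (0 <= gam ^ r * G0).
    { apply Rmult_le_pos; auto. apply pow_le. unfold gam. pose proof INR_n_ge1.
      apply Rmult_le_pos; [apply Rmult_le_pos; [lra| apply pow_le; lra]|].
      left; apply Rinv_0_lt_compat; lra. }
    destruct (round (b + r) M (gam ^ r * G0) J HM' H H2) as [J' [H3 H4]]; [lia|].
    exists J'. split; [lia|].
    replace (b + S r)%nat with (S (b + r)) by lia.
    intros k Hk HJ'. pose proof (H4 k Hk HJ'). simpl. lra.
Qed.

Lemma top_half b M m J0 :
  (forall k, (k < n)%nat -> th (n * b) k <= M) -> m <= M ->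
  (forall k, (k < n)%nat -> J0 k = false -> th (n * b) k <= (M + m) / 2) ->
  (2 * length (filter J0 (vertices n)) <= n)%nat ->
  forall k, (k < n)%nat -> th (n * (b + n)) k <= M - gam ^ n * ((M - m) / 2).
Proof.
  intros HM Hmm HJ Hc.
  destruct (rounds b M ((M - m) / 2) J0 HM ltac:(lra)) with (r := n) as [J [H1 H2]]; auto.
  { intros k Hk HJk. pose proof (HJ k Hk HJk). lra. }
  assert (length (filter J (vertices n)) = 0%nat) by lia.
  intros k Hk. pose proof (cnt_zero J (vertices n) H k (proj2 (in_vertices n k) Hk)).
  pose proof (H2 k Hk H0). lra.
Qed.
End Propag.

Definition cis (a : R) : C := (cos a, sin a).

Lemma cis_add a b : Cmult (cis a) (cis b) = cis (a + b).
Proof. unfold cis, Cmult; simpl. rewrite cos_plus, sin_plus. f_equal; ring. Qed.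

Lemma conj_cis a : Cconj (cis a) = cis (- a).
Proof. unfold cis, Cconj; simpl. rewrite cos_neg, sin_neg. auto. Qed.

Lemma Cmod_cis a : Cmod (cis a) = 1.
Proof. unfold Cmod, cis; cbn [fst snd]. replace (cos a ^ 2 + sin a ^ 2) with 1 by (pose proof (sin2_cos2 a); unfold Rsqr in *; nra). apply sqrt_1. Qed.

Lemma c_conj c : Cmod c = 1 -> Cmult c (Cconj c) = 1%C.
Proof. intros H. rewrite <- Cmod2_conj, H. f_equal. simpl. ring. Qed.

Lemma unit_polar z : Cmod z = 1 -> exists a, - PI < a <= PI /\ z = cis a.
Proof.
  destruct z as [x y]. unfold Cmod; simpl. intros H.
  assert (Hs : x * (x * 1) + y * (y * 1) = 1).
  { rewrite <- (sqrt_sqrt (x * (x * 1) + y * (y * 1))); [rewrite H; ring| nra]. }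
  assert (Hx : -1 <= x <= 1) by nra.
  assert (H1 : 1 - x² = y²) by (unfold Rsqr; lra).
  pose proof (acos_bound x).
  destruct (Rle_dec 0 y) as [Hy|Hy].
  - exists (acos x). split; [pose proof PI_RGT_0; lra|].
    unfold cis. rewrite cos_acos, sin_acos by auto. rewrite H1, sqrt_Rsqr; auto.
  - exists (- acos x). split.
    + assert (-1 < x < 1) by nra. pose proof (acos_bound_lt x H2). lra.
    + unfold cis. rewrite cos_neg, sin_neg, cos_acos, sin_acos by auto.
      rewrite H1, sqrt_Rsqr_abs, Rabs_left by lra. f_equal; ring.
Qed.

Lemma arg_spec z : Cmod z = 1 -> - PI < arg z <= PI /\ z = cis (arg z).
Proof.
  intros H. unfold arg.
  destruct (epsilon_spec (inhabits 0%R)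
    (fun th => - PI < th <= PI /\ z = Cmult (RtoC (Cmod z)) (cos th, sin th))) as [H1 H2].
  { destruct (unit_polar z H) as [a [Ha1 Ha2]]. exists a. split; auto.
    rewrite H. fold (cis a). rewrite <- Ha2. ring. }
  split; auto. set (e := epsilon _ _) in *. rewrite H in H2. unfold cis. rewrite H2 at 1. ring.
Qed.

Lemma cis_inj a b : - PI < a <= PI -> - PI < b <= PI -> cis a = cis b -> a = b.
Proof.
  intros Ha Hb E. unfold cis in E. injection E as E1 E2.
  set (u := (a - b) / 2).
  assert (Hc : cos (2 * u) = 1).
  { unfold u. replace (2 * ((a - b) / 2)) with (a - b) by field.
    rewrite cos_minus, E1, E2. pose proof (sin2_cos2 b). unfold Rsqr in H. lra. }
  rewrite cos_2a_sin in Hc.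
  assert (Hs : sin u = 0) by nra.
  pose proof PI_RGT_0.
  destruct (Rtotal_order u 0) as [Hl|[He|Hg]].
  - assert (0 < sin (- u)) by (apply sin_gt_0; unfold u in *; lra).
    rewrite sin_neg in H0. lra.
  - unfold u in He. lra.
  - assert (0 < sin u) by (apply sin_gt_0; unfold u in *; lra). lra.
Qed.

Lemma arg_cis a : - PI < a <= PI -> arg (cis a) = a.
Proof.
  intros Ha. destruct (arg_spec (cis a) (Cmod_cis a)) as [H1 H2].
  apply cis_inj; auto.
Qed.

Lemma count_map {A} (Pr : R -> bool) (f : A -> R) l :
  length (filter Pr (map f l)) = length (filter (fun x => Pr (f x)) l).
Proof. induction l as [|a l IH]; simpl; auto. destruct (Pr (f a)); simpl; auto. Qed.

Lemma cnt_split {A} (P B : A -> bool) l :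
  (length (filter P l) <= length (filter (fun x => andb (P x) (negb (B x))) l) + length (filter B l))%nat.
Proof.
  induction l as [|a l IH]; simpl; auto.
  destruct (P a), (B a); simpl; lia.
Qed.

Lemma filter_sub {A} (A1 B1 : A -> bool) l : (forall x, B1 x = true -> A1 x = true) ->
  filter B1 (filter A1 l) = filter B1 l.
Proof.
  intros H. induction l as [|a l IH]; simpl; auto.
  destruct (A1 a) eqn:Ea; simpl.
  - destruct (B1 a); rewrite IH; auto.
  - destruct (B1 a) eqn:Eb; [rewrite (H a Eb) in Ea; discriminate|auto].
Qed.

Lemma fold_max_ge x l : In x l -> x <= fold_right Rmax 0 l.
Proof.
  induction l as [|a l IH]; simpl; [tauto|]. intros [<-|H].
  - apply Rmax_l.
  - eapply Rle_trans; [apply IH; auto| apply Rmax_r].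
Qed.

Lemma fold_max_le B l : 0 <= B -> (forall x, In x l -> x <= B) -> fold_right Rmax 0 l <= B.
Proof.
  intros HB. induction l as [|a l IH]; simpl; intros H; auto.
  apply Rmax_lub; auto.
Qed.

Lemma fold_max_nonneg l : 0 <= fold_right Rmax 0 l.
Proof. induction l as [|a l IH]; simpl; [lra|]. eapply Rle_trans; [apply IH|apply Rmax_r]. Qed.

Lemma nbrs_lt n E j i : In i (nbrs n E j) -> (i < n)%nat /\ E j i = true.
Proof. unfold nbrs. rewrite filter_In, in_vertices. tauto. Qed.

Lemma nbrs_len n E j : (length (nbrs n E j) <= n)%nat.
Proof. unfold nbrs. eapply Nat.le_trans; [apply filter_length_le|]. unfold vertices; rewrite length_seq; auto. Qed.

Lemma conj_identity sj si zi zj :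
  Cmult (Cmult (Cmult sj (Cconj si)) zi) (Cconj zj) =
  Cmult (Cconj (Cmult (Cconj sj) zj)) (Cmult (Cconj si) zi).
Proof. rewrite Cmult_conj, Cconj_conj. ring. Qed.

Lemma cconj_c_cis c a b : Cmod c = 1 ->
  Cmult (Cconj (Cmult c (cis a))) (Cmult c (cis b)) = cis (b - a).
Proof.
  intros Hc. rewrite Cmult_conj, conj_cis.
  transitivity (Cmult (Cmult c (Cconj c)) (Cmult (cis (-a)) (cis b))); [ring|].
  rewrite c_conj, cis_add by auto. replace (-a + b) with (b - a) by ring. ring.
Qed.

Lemma c_cis_conj c a b : Cmod c = 1 ->
  Cmult (Cmult c (cis a)) (Cconj (Cmult c (cis b))) = cis (a - b).
Proof.
  intros Hc. rewrite Cmult_conj, conj_cis.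
  transitivity (Cmult (Cmult c (Cconj c)) (Cmult (cis a) (cis (-b)))); [ring|].
  rewrite c_conj, cis_add by auto. replace (a + - b) with (a - b) by ring. ring.
Qed.

Section Conc.
Variable n : nat.
Hypothesis Hn : (0 < n)%nat.
Variables E Eb : nat -> nat -> bool.
Hypothesis HEb_sub : forall j k, Eb j k = true -> E j k = true.
Variable zstar : nat -> C.
Hypothesis Hzstar : forall j, (j < n)%nat -> Cmod (zstar j) = 1.
Variable zobs : nat -> nat -> C.
Hypothesis Hgood : forall j k, E j k = true -> Eb j k = false ->
             zobs j k = Cmult (zstar j) (Cconj (zstar k)).
Hypothesis Halpha : alpha0 n E Eb < 1/4.
Variable z0 : nat -> C.
Hypothesis Hz0 : forall j, (j < n)%nat -> Cmod (z0 j) = 1.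
Variable c : C.
Hypothesis Hc : Cmod c = 1.
Variable eta : R.
Hypothesis Heta : 0 < eta < 1.

Definition zt t := sync_traj n E zobs eta z0 t.

Definition Xs t := map (fun i => LogC (zt t (t mod n)) (Cmult (zobs (t mod n) i) (zt t i)))
                       (nbrs n E (t mod n)).

Fixpoint th (t : nat) : nat -> R :=
  match t with
  | O => fun k => arg (Cmult (Cmult (Cconj (zstar k)) (z0 k)) (Cconj c))
  | S t' => fun k => if Nat.eqb k (t' mod n) then th t' k + eta * ave (trim25 (Xs t')) else th t' k
  end.

Lemma th_S t k : th (S t) k = if Nat.eqb k (t mod n) then th t k + eta * ave (trim25 (Xs t)) else th t k.
Proof. reflexivity. Qed.

Lemma zt_S t k : zt (S t) k = if Nat.eqb k (t mod n) then ExpC (zt t (t mod n)) (eta * ave (trim25 (Xs t))) else zt t k.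
Proof. reflexivity. Qed.

Lemma e_inv t k : (k < n)%nat -> Cmult (Cconj (zstar k)) (zt t k) = Cmult c (cis (th t k)).
Proof.
  intros Hk. induction t as [|t IH].
  - simpl th. unfold zt; simpl sync_traj.
    set (e := Cmult (Cconj (zstar k)) (z0 k)).
    assert (He : Cmod e = 1) by (unfold e; rewrite Cmod_mult, Cmod_conj, Hzstar, Hz0; auto; ring).
    assert (Hw : Cmod (Cmult e (Cconj c)) = 1) by (rewrite Cmod_mult, Cmod_conj, He, Hc; ring).
    destruct (arg_spec _ Hw) as [_ Hw2]. rewrite <- Hw2.
    transitivity (Cmult e (Cmult c (Cconj c))); [rewrite c_conj by auto; ring| ring].
  - rewrite th_S, zt_S. destruct (Nat.eqb k (t mod n)) eqn:Ek.
    + apply Nat.eqb_eq in Ek. rewrite <- Ek.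
      set (ph := eta * ave (trim25 (Xs t))).
      rewrite <- cis_add.
      transitivity (Cmult (cis ph) (Cmult (Cconj (zstar k)) (zt t k))).
      * unfold ExpC, cis. ring.
      * rewrite IH. ring.
    + auto.
Qed.

Variables m0 M0 : R.
Hypothesis Hm0 : - PI / 2 < m0.
Hypothesis HM0 : M0 < PI / 2.

Definition Rng t := forall k, (k < n)%nat -> m0 <= th t k <= M0.

Lemma jlt t : (t mod n < n)%nat.
Proof. apply Nat.mod_upper_bound. lia. Qed.

Lemma log_good t : Rng t -> forall i, In i (nbrs n E (t mod n)) -> Eb (t mod n) i = false ->
  LogC (zt t (t mod n)) (Cmult (zobs (t mod n) i) (zt t i)) = th t i - th t (t mod n).
Proof.
  intros HR i Hi Hb. set (j := (t mod n)%nat) in *.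
  destruct (nbrs_lt _ _ _ _ Hi) as [Hin HE].
  pose proof (jlt t) as Hj. fold j in Hj.
  unfold LogC. rewrite (Hgood j i HE Hb), conj_identity, !e_inv by auto.
  rewrite cconj_c_cis by auto. apply arg_cis.
  pose proof (HR i Hin). pose proof (HR j Hj). pose proof PI_RGT_0. lra.
Qed.

Lemma dangle_th t j k : Rng t -> (j < n)%nat -> (k < n)%nat ->
  dangle (Cmult (Cconj (zstar j)) (zt t j)) (Cmult (Cconj (zstar k)) (zt t k)) = Rabs (th t j - th t k).
Proof.
  intros HR Hj Hk. unfold dangle. rewrite !e_inv by auto. rewrite c_cis_conj by auto.
  rewrite arg_cis; auto. pose proof (HR j Hj). pose proof (HR k Hk). pose proof PI_RGT_0. lra.
Qed.

Lemma bad_count j : (j < n)%nat -> 0 < INR (length (nbrs n E j)) ->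
  INR (length (nbrs n Eb j)) < INR (length (nbrs n E j)) / 4.
Proof.
  intros Hj Hd.
  assert (INR (length (nbrs n Eb j)) / INR (length (nbrs n E j)) <= alpha0 n E Eb).
  { unfold alpha0. apply fold_max_ge. apply in_map_iff. exists j. split; auto. apply in_vertices; auto. }
  assert (INR (length (nbrs n Eb j)) / INR (length (nbrs n E j)) < 1/4) by lra.
  apply Rmult_lt_compat_r with (r := INR (length (nbrs n E j))) in H0; auto.
  unfold Rdiv in H0. rewrite Rmult_assoc, Rinv_l in H0 by lra. lra.
Qed.

Lemma bad_eq j : length (filter (Eb j) (nbrs n E j)) = length (nbrs n Eb j).
Proof. unfold nbrs. rewrite filter_sub; auto. Qed.

Lemma bad_bound t (Qb : R -> bool) : Rng t -> Xs t <> [] ->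
  (forall i, In i (nbrs n E (t mod n)) -> Eb (t mod n) i = false ->
     Qb (th t i - th t (t mod n)) = false) ->
  INR (length (filter Qb (Xs t))) < INR (length (Xs t)) / 4.
Proof.
  intros HR HX H.
  assert (Hd : 0 < INR (length (nbrs n E (t mod n)))).
  { unfold Xs in HX. destruct (nbrs n E (t mod n)); [simpl in HX; congruence|].
    change (length (n0 :: l)) with (S (length l)). rewrite S_INR. pose proof (pos_INR (length l)). lra. }
  pose proof (bad_count _ (jlt t) Hd).
  unfold Xs. rewrite count_map, length_map.
  eapply Rle_lt_trans; [|apply H0]. rewrite <- bad_eq. apply le_INR, cnt_mono.
  intros i Hi HQ. destruct (Eb (t mod n) i) eqn:Eb'; auto.
  rewrite log_good in HQ by auto. rewrite H in HQ by auto. discriminate.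
Qed.

Lemma good_bound t (Qb : R -> bool) (Pp : nat -> bool) : Rng t ->
  (forall i, In i (nbrs n E (t mod n)) -> Pp i = true -> Eb (t mod n) i = false ->
     Qb (th t i - th t (t mod n)) = true) ->
  INR (length (filter Pp (nbrs n E (t mod n)))) - INR (length (nbrs n Eb (t mod n)))
    <= INR (length (filter Qb (Xs t))).
Proof.
  intros HR H.
  unfold Xs. rewrite count_map. rewrite <- bad_eq.
  pose proof (cnt_split Pp (Eb (t mod n)) (nbrs n E (t mod n))).
  assert (length (filter (fun x => andb (Pp x) (negb (Eb (t mod n) x))) (nbrs n E (t mod n))) <=
          length (filter (fun x => Qb (LogC (zt t (t mod n)) (Cmult (zobs (t mod n) x) (zt t x)))) (nbrs n E (t mod n))))%nat.
  { apply cnt_mono. intros i Hi HP. apply Bool.andb_true_iff in HP as [HP1 HP2].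
    apply Bool.negb_true_iff in HP2. rewrite log_good by auto. auto. }
  apply le_INR in H0. apply le_INR in H1. rewrite plus_INR in H0. lra.
Qed.

Lemma ave_nil : ave (trim25 []) = 0.
Proof. unfold ave. simpl. unfold Rdiv. apply Rmult_0_l. Qed.

Lemma th_Sj t : th (S t) (t mod n) = th t (t mod n) + eta * ave (trim25 (Xs t)).
Proof. rewrite th_S, Nat.eqb_refl. auto. Qed.

Lemma len_Xs t : length (Xs t) = length (nbrs n E (t mod n)).
Proof. unfold Xs; apply length_map. Qed.

Lemma conc_up t M : Rng t -> (forall k, (k < n)%nat -> th t k <= M) ->
  th (S t) (t mod n) <= (1 - eta) * th t (t mod n) + eta * M.
Proof.
  intros HR HM. rewrite th_Sj. pose proof (HM _ (jlt t)).
  destruct (Xs t) as [|x l] eqn:EX.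
  - rewrite ave_nil. nra.
  - rewrite <- EX. assert (HX : Xs t <> []) by (rewrite EX; discriminate).
    assert (ave (trim25 (Xs t)) <= M - th t (t mod n)).
    { apply trim_hi; auto. apply bad_bound; auto.
      intros i Hi Hb. destruct (nbrs_lt _ _ _ _ Hi) as [Hin _]. pose proof (HM i Hin).
      apply Bool.negb_false_iff, Rleb_true. lra. }
    nra.
Qed.

Lemma conc_lo t m : Rng t -> (forall k, (k < n)%nat -> m <= th t k) ->
  (1 - eta) * th t (t mod n) + eta * m <= th (S t) (t mod n).
Proof.
  intros HR HM. rewrite th_Sj. pose proof (HM _ (jlt t)).
  destruct (Xs t) as [|x l] eqn:EX.
  - rewrite ave_nil. nra.
  - rewrite <- EX. assert (HX : Xs t <> []) by (rewrite EX; discriminate).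
    assert (m - th t (t mod n) <= ave (trim25 (Xs t))).
    { apply trim_lo; auto. apply bad_bound; auto.
      intros i Hi Hb. destruct (nbrs_lt _ _ _ _ Hi) as [Hin _]. pose proof (HM i Hin).
      apply Bool.negb_false_iff, Rleb_true. lra. }
    nra.
Qed.

Lemma INR_n_pos : 0 < INR n.
Proof. apply lt_0_INR. lia. Qed.

Lemma conc_prog_up t M L (Pp : nat -> bool) : Rng t ->
  (forall k, (k < n)%nat -> th t k <= M) -> L <= M ->
  (forall k, (k < n)%nat -> Pp k = true -> th t k <= L) ->
  (length (nbrs n E (t mod n)) < 2 * length (filter Pp (nbrs n E (t mod n))))%nat ->
  th (S t) (t mod n) <= M - eta * (M - L) / INR n.
Proof.
  intros HR HM HL HP Hcnt. rewrite th_Sj. pose proof (HM _ (jlt t)) as Hj.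
  set (j := (t mod n)%nat) in *.
  assert (Hd0 : (0 < length (nbrs n E j))%nat) by (pose proof (filter_length_le Pp (nbrs n E j)); lia).
  assert (HX : Xs t <> []).
  { intros EX. pose proof (len_Xs t). rewrite EX in H. simpl in H. fold j in H. lia. }
  assert (Hd : 0 < INR (length (nbrs n E j))) by (apply lt_0_INR; auto).
  pose proof (bad_count j (jlt t) Hd) as Hb.
  assert (Hgb := good_bound t (fun y => Rleb y (L - th t j)) Pp HR).
  fold j in Hgb.
  assert (INR (length (filter Pp (nbrs n E j))) - INR (length (nbrs n Eb j)) <=
          INR (length (filter (fun y => Rleb y (L - th t j)) (Xs t)))).
  { apply Hgb. intros i Hi HPi _. destruct (nbrs_lt _ _ _ _ Hi) as [Hin _].
    pose proof (HP i Hin HPi). apply Rleb_true. lra. }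
  apply lt_INR in Hcnt. rewrite mult_INR in Hcnt. simpl (INR 2) in Hcnt.
  assert (Hup : ave (trim25 (Xs t)) <= (M - th t j) - ((M - th t j) - (L - th t j)) / INR (length (Xs t))).
  { apply trim_up; auto.
    - apply bad_bound; auto.
      intros i Hi Hb'. destruct (nbrs_lt _ _ _ _ Hi) as [Hin _]. pose proof (HM i Hin).
      apply Bool.negb_false_iff, Rleb_true. fold j; lra.
    - unfold count_le. rewrite len_Xs. fold j. lra.
    - lra. }
  rewrite len_Xs in Hup. fold j in Hup.
  replace ((M - th t j) - (L - th t j)) with (M - L) in Hup by ring.
  assert ((M - L) / INR n <= (M - L) / INR (length (nbrs n E j))).
  { unfold Rdiv. apply Rmult_le_compat_l; [lra|]. apply Rinv_le_contravar; auto.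
    apply le_INR, nbrs_len. }
  assert (eta * ave (trim25 (Xs t)) <= eta * (M - th t j) - eta * ((M - L) / INR n)).
  { assert (eta * ave (trim25 (Xs t)) <= eta * ((M - th t j) - (M - L) / INR (length (nbrs n E j)))).
    { apply Rmult_le_compat_l; lra. }
    assert (eta * ((M - L) / INR n) <= eta * ((M - L) / INR (length (nbrs n E j)))).
    { apply Rmult_le_compat_l; lra. }
    lra. }
  assert (eta * (M - L) / INR n = eta * ((M - L) / INR n)) by (unfold Rdiv; ring).
  assert (th t j + eta * (M - th t j) <= M) by nra.
  lra.
Qed.

Lemma conc_prog_lo t m U (Pp : nat -> bool) : Rng t ->
  (forall k, (k < n)%nat -> m <= th t k) -> m <= U ->
  (forall k, (k < n)%nat -> Pp k = true -> U <= th t k) ->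
  (length (nbrs n E (t mod n)) < 2 * length (filter Pp (nbrs n E (t mod n))))%nat ->
  m + eta * (U - m) / INR n <= th (S t) (t mod n).
Proof.
  intros HR HM HL HP Hcnt. rewrite th_Sj. pose proof (HM _ (jlt t)) as Hj.
  set (j := (t mod n)%nat) in *.
  assert (Hd0 : (0 < length (nbrs n E j))%nat) by (pose proof (filter_length_le Pp (nbrs n E j)); lia).
  assert (HX : Xs t <> []).
  { intros EX. pose proof (len_Xs t). rewrite EX in H. simpl in H. fold j in H. lia. }
  assert (Hd : 0 < INR (length (nbrs n E j))) by (apply lt_0_INR; auto).
  pose proof (bad_count j (jlt t) Hd) as Hb.
  assert (Hgb := good_bound t (fun y => Rleb (U - th t j) y) Pp HR).
  fold j in Hgb.
  assert (INR (length (filter Pp (nbrs n E j))) - INR (length (nbrs n Eb j)) <=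
          INR (length (filter (fun y => Rleb (U - th t j) y) (Xs t)))).
  { apply Hgb. intros i Hi HPi _. destruct (nbrs_lt _ _ _ _ Hi) as [Hin _].
    pose proof (HP i Hin HPi). apply Rleb_true. lra. }
  apply lt_INR in Hcnt. rewrite mult_INR in Hcnt. simpl (INR 2) in Hcnt.
  assert (Hdn : (m - th t j) + ((U - th t j) - (m - th t j)) / INR (length (Xs t)) <= ave (trim25 (Xs t))).
  { apply trim_down; auto.
    - apply bad_bound; auto.
      intros i Hi Hb'. destruct (nbrs_lt _ _ _ _ Hi) as [Hin _]. pose proof (HM i Hin).
      apply Bool.negb_false_iff, Rleb_true. fold j; lra.
    - rewrite len_Xs. fold j. lra.
    - lra. }
  rewrite len_Xs in Hdn. fold j in Hdn.
  replace ((U - th t j) - (m - th t j)) with (U - m) in Hdn by ring.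
  assert ((U - m) / INR n <= (U - m) / INR (length (nbrs n E j))).
  { unfold Rdiv. apply Rmult_le_compat_l; [lra|]. apply Rinv_le_contravar; auto.
    apply le_INR, nbrs_len. }
  assert (eta * (m - th t j) + eta * ((U - m) / INR n) <= eta * ave (trim25 (Xs t))).
  { assert (eta * ((m - th t j) + (U - m) / INR (length (nbrs n E j))) <= eta * ave (trim25 (Xs t))).
    { apply Rmult_le_compat_l; lra. }
    assert (eta * ((U - m) / INR n) <= eta * ((U - m) / INR (length (nbrs n E j)))).
    { apply Rmult_le_compat_l; lra. }
    lra. }
  assert (eta * (U - m) / INR n = eta * ((U - m) / INR n)) by (unfold Rdiv; ring).
  assert (m <= th t j + eta * (m - th t j)) by nra.
  lra.
Qed.

Hypothesis H0rng : Rng 0.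

Lemma rng_all t : Rng t.
Proof.
  induction t as [|t IH]; auto.
  intros k Hk. rewrite th_S. destruct (Nat.eqb k (t mod n)) eqn:Ek.
  - apply Nat.eqb_eq in Ek. subst k. rewrite <- th_Sj. split.
    + pose proof (conc_lo t m0 IH (fun k Hk => proj1 (IH k Hk))). pose proof (IH _ Hk). nra.
    + pose proof (conc_up t M0 IH (fun k Hk => proj2 (IH k Hk))). pose proof (IH _ Hk). nra.
  - apply IH; auto.
Qed.
End Conc.

Lemma pow_le1 x k : 0 <= x <= 1 -> x ^ k <= 1.
Proof. intros H. induction k; simpl; [lra|]. assert (0 <= x ^ k) by (apply pow_le; lra). nra. Qed.

Lemma bernoulli a N : 0 <= a <= 1 -> 1 - INR N * a <= (1 - a) ^ N.
Proof.
  intros H. induction N as [|N IH]; [simpl; lra|]. rewrite S_INR. change ((1 - a) ^ S N) with ((1 - a) * (1 - a) ^ N).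
  assert (0 <= (1 - a) ^ N) by (apply pow_le; lra).
  assert (0 <= INR N) by apply pos_INR. nra.
Qed.

Section Final.
Variable n : nat.
Hypothesis Hn : (0 < n)%nat.
Variables E Eb : nat -> nat -> bool.
Hypothesis HEb_sub : forall j k, Eb j k = true -> E j k = true.
Variable zstar : nat -> C.
Hypothesis Hzstar : forall j, (j < n)%nat -> Cmod (zstar j) = 1.
Variable zobs : nat -> nat -> C.
Hypothesis Hgood : forall j k, E j k = true -> Eb j k = false ->
             zobs j k = Cmult (zstar j) (Cconj (zstar k)).
Hypothesis Halpha : alpha0 n E Eb < 1/4.
Variable z0 : nat -> C.
Hypothesis Hz0 : forall j, (j < n)%nat -> Cmod (z0 j) = 1.
Variable c : C.
Hypothesis Hc : Cmod c = 1.
Variable eta : R.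
Hypothesis Heta : 0 < eta < 1.
Variables m0 M0 : R.
Hypothesis Hm0 : - PI / 2 < m0.
Hypothesis HM0 : M0 < PI / 2.
Hypothesis H0rng : Rng n E zstar zobs z0 c eta m0 M0 0.
Hypothesis Hcut : forall J : nat -> bool,
      (exists j, (j < n)%nat /\ J j = true) ->
      (2 * length (filter J (vertices n)) <= n)%nat ->
      exists j, (j < n)%nat /\ J j = true /\
        (length (filter (fun k => J k) (nbrs n E j))
         < length (filter (fun k => negb (J k)) (nbrs n E j)))%nat.

Let TH := th n E zstar zobs z0 c eta.
Let NTH := fun t k => - th n E zstar zobs z0 c eta t k.
Let RA := rng_all n Hn E Eb HEb_sub zstar Hzstar zobs Hgood Halpha z0 Hz0 c Hc eta Heta m0 M0 Hm0 HM0 H0rng.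

Lemma sup : forall t M, (forall k, (k < n)%nat -> TH t k <= M) ->
  forall k, (k < n)%nat -> TH (S t) k <= (1 - eta) * TH t k + eta * M.
Proof.
  intros t M HM k Hk. unfold TH. destruct (Nat.eq_dec k (t mod n)) as [Ek|Ek].
  - subst k.
    apply (conc_up n Hn E Eb HEb_sub zstar Hzstar zobs Hgood Halpha z0 Hz0 c Hc eta Heta m0 M0 Hm0 HM0); auto.
  - rewrite th_S. apply Nat.eqb_neq in Ek. rewrite Ek. pose proof (HM k Hk). unfold TH in H. nra.
Qed.

Lemma sdn : forall t M, (forall k, (k < n)%nat -> NTH t k <= M) ->
  forall k, (k < n)%nat -> NTH (S t) k <= (1 - eta) * NTH t k + eta * M.
Proof.
  intros t M HM k Hk. unfold NTH in *. destruct (Nat.eq_dec k (t mod n)) as [Ek|Ek].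
  - subst k.
    assert (H := conc_lo n Hn E Eb HEb_sub zstar Hzstar zobs Hgood Halpha z0 Hz0 c Hc eta Heta m0 M0 Hm0 HM0 t (- M) (RA t)).
    assert ((1 - eta) * th n E zstar zobs z0 c eta t (t mod n) + eta * - M <=
        th n E zstar zobs z0 c eta (S t) (t mod n)).
    { apply H. intros k Hk'. pose proof (HM k Hk'). lra. }
    lra.
  - rewrite th_S. apply Nat.eqb_neq in Ek. rewrite Ek. pose proof (HM k Hk). nra.
Qed.

Lemma pup : forall t M L (P : nat -> bool),
  (forall k, (k < n)%nat -> TH t k <= M) -> L <= M ->
  (forall k, (k < n)%nat -> P k = true -> TH t k <= L) ->
  (length (nbrs n E (t mod n)) < 2 * length (filter P (nbrs n E (t mod n))))%nat ->
  TH (S t) (t mod n) <= M - eta * (M - L) / INR n.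
Proof.
  intros. unfold TH in *.
  apply (conc_prog_up n Hn E Eb HEb_sub zstar Hzstar zobs Hgood Halpha z0 Hz0 c Hc eta Heta m0 M0 Hm0 HM0 t M L P); auto.
Qed.

Lemma pdn : forall t M L (P : nat -> bool),
  (forall k, (k < n)%nat -> NTH t k <= M) -> L <= M ->
  (forall k, (k < n)%nat -> P k = true -> NTH t k <= L) ->
  (length (nbrs n E (t mod n)) < 2 * length (filter P (nbrs n E (t mod n))))%nat ->
  NTH (S t) (t mod n) <= M - eta * (M - L) / INR n.
Proof.
  intros t M L P H1 H2 H3 H4. unfold NTH in *.
  assert (H := conc_prog_lo n Hn E Eb HEb_sub zstar Hzstar zobs Hgood Halpha z0 Hz0 c Hc eta Heta m0 M0 Hm0 HM0 t (- M) (- L) P (RA t)).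
  assert (- M + eta * (- L - - M) / INR n <= th n E zstar zobs z0 c eta (S t) (t mod n)).
  { apply H; auto; [intros k Hk; pose proof (H1 k Hk); lra| lra| intros k Hk HP; pose proof (H3 k Hk HP); lra]. }
  assert (eta * (- L - - M) / INR n = eta * (M - L) / INR n) by (unfold Rdiv; ring).
  lra.
Qed.

Let gam := eta * (1 - eta) ^ n / INR n.
Let g := gam ^ n / 2.

Lemma contraction b M m : m <= M ->
  (forall k, (k < n)%nat -> m <= TH (n * b) k <= M) ->
  exists M' m', m' <= M' /\ M' - m' <= (1 - g) * (M - m) /\
    forall k, (k < n)%nat -> m' <= TH (n * (b + n)) k <= M'.
Proof.
  intros Hmm HR.
  set (mid := (M + m) / 2).
  set (J0 := fun k => negb (Rleb (TH (n * b) k) mid)).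
  set (J1 := fun k => negb (Rleb mid (TH (n * b) k))).
  assert (Hc01 : (length (filter J0 (vertices n)) + length (filter J1 (vertices n)) <= n)%nat).
  { pose proof (filter_length J0 (vertices n)). unfold vertices in H at 3. rewrite length_seq in H.
    assert (length (filter J1 (vertices n)) <= length (filter (fun x => negb (J0 x)) (vertices n)))%nat.
    { apply cnt_mono. intros x _ H1. unfold J0, J1 in *. apply Bool.negb_true_iff, Rleb_false in H1.
      apply Bool.negb_true_iff, Bool.negb_false_iff, Rleb_true. lra. }
    lia. }
  assert (HupM : forall k, (k < n)%nat -> TH (n * (b + n)) k <= M).
  { intros k Hk. replace (n * (b + n))%nat with (n * b + n * n)%nat by lia.
    apply (proj1 (decay n Hn eta Heta TH sup (n * n) (n * b) M (fun k Hk => proj2 (HR k Hk)))); auto. }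
  assert (Hlom : forall k, (k < n)%nat -> m <= TH (n * (b + n)) k).
  { intros k Hk. replace (n * (b + n))%nat with (n * b + n * n)%nat by lia.
    assert (NTH (n * b + n * n)%nat k <= - m).
    { assert (HH : forall k, (k < n)%nat -> NTH (n * b) k <= - m).
      { intros k' Hk'. unfold NTH. pose proof (HR k' Hk'). unfold TH in H. lra. }
      apply (proj1 (decay n Hn eta Heta NTH sdn (n * n) (n * b) (- m) HH)); auto. }
    unfold NTH, TH in *. lra. }
  assert (Hg : 0 <= gam ^ n).
  { apply pow_le. unfold gam. pose proof (INR_n_pos n Hn).
    apply Rmult_le_pos; [apply Rmult_le_pos; [lra|apply pow_le; lra]|left; apply Rinv_0_lt_compat; lra]. }
  assert (Hgam : 0 <= gam <= 1).
  { unfold gam. pose proof (INR_n_pos n Hn). pose proof (INR_n_ge1 n Hn).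
    assert (0 <= (1 - eta) ^ n <= 1) by (split; [apply pow_le; lra| apply pow_le1; lra]).
    assert (0 < / INR n <= 1).
    { split; [apply Rinv_0_lt_compat; lra|]. rewrite <- Rinv_1. apply Rinv_le_contravar; lra. }
    unfold Rdiv. split; [apply Rmult_le_pos; [apply Rmult_le_pos|]; lra|].
    assert (eta * (1 - eta) ^ n <= 1) by nra. nra. }
  assert (Hg1 : gam ^ n <= 1) by (apply pow_le1; lra).
  destruct (Compare_dec.le_lt_dec (2 * length (filter J0 (vertices n))) n) as [H0|H0].
  - pose proof (top_half n Hn E eta Heta TH sup pup Hcut b M m J0 (fun k Hk => proj2 (HR k Hk)) Hmm) as HT.
    exists (M - gam ^ n * ((M - m) / 2)), m. split; [|split].
    + nra.
    + unfold g. nra.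
    + intros k Hk. split; auto. apply HT; auto.
      intros k' Hk' HJ. unfold J0 in HJ. apply Bool.negb_false_iff, Rleb_true in HJ. auto.
  - assert (H1 : (2 * length (filter J1 (vertices n)) <= n)%nat) by lia.
    assert (HNR : forall k, (k < n)%nat -> NTH (n * b) k <= - m).
    { intros k Hk. unfold NTH. pose proof (HR k Hk). unfold TH in H. lra. }
    pose proof (top_half n Hn E eta Heta NTH sdn pdn Hcut b (- m) (- M) J1 HNR ltac:(lra)) as HT.
    exists M, (m + gam ^ n * ((M - m) / 2)). split; [|split].
    + nra.
    + unfold g. nra.
    + intros k Hk. split; auto.
      assert (NTH (n * (b + n)) k <= - m - gam ^ n * ((- m - - M) / 2)).
      { apply HT; auto. intros k' Hk' HJ. unfold J1 in HJ. apply Bool.negb_false_iff, Rleb_true in HJ.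
        unfold NTH. fold mid in HJ. unfold mid in *. unfold TH in HJ. lra. }
      unfold NTH, TH in *. lra.
Qed.

Lemma g_bounds : 0 < g <= 1/2.
Proof.
  unfold g, gam. pose proof (INR_n_pos n Hn). pose proof (INR_n_ge1 n Hn).
  assert (0 < (1 - eta) ^ n <= 1) by (split; [apply pow_lt; lra| apply pow_le1; lra]).
  assert (0 < / INR n <= 1).
  { split; [apply Rinv_0_lt_compat; lra|]. rewrite <- Rinv_1. apply Rinv_le_contravar; lra. }
  assert (0 < eta * (1 - eta) ^ n / INR n <= 1).
  { unfold Rdiv. split; [apply Rmult_lt_0_compat; [apply Rmult_lt_0_compat|]; lra|].
    assert (eta * (1 - eta) ^ n <= 1) by nra. nra. }
  split.
  - apply Rmult_lt_0_compat; [apply pow_lt; lra| lra].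
  - assert ((eta * (1 - eta) ^ n / INR n) ^ n <= 1) by (apply pow_le1; lra). lra.
Qed.

Lemma iter p : exists M m, m <= M /\ M - m <= (1 - g) ^ p * (M0 - m0) /\
  forall k, (k < n)%nat -> m <= TH (n * (n * p)) k <= M.
Proof.
  pose proof g_bounds.
  induction p as [|p IH].
  - exists M0, m0. replace (n * (n * 0))%nat with 0%nat by lia.
    pose proof (H0rng 0%nat Hn). split; [lra|]. split; [simpl; lra|]. apply H0rng.
  - destruct IH as [M [m [H1 [H2 H3]]]].
    destruct (contraction (n * p) M m H1 H3) as [M' [m' [H4 [H5 H6]]]].
    exists M', m'. split; auto. split.
    + simpl. assert (0 <= 1 - g) by lra. nra.
    + replace (n * (n * S p))%nat with (n * (n * p + n))%nat by lia. auto.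
Qed.

Lemma within t : exists M m, M - m <= (1 - g) ^ (t / (n * n)) * (M0 - m0) /\
  forall k, (k < n)%nat -> m <= TH t k <= M.
Proof.
  destruct (iter (t / (n * n))) as [M [m [H1 [H2 H3]]]].
  exists M, m. split; auto.
  assert (Ht : t = (n * (n * (t / (n * n))) + t mod (n * n))%nat).
  { rewrite Nat.mul_assoc. apply Nat.div_mod_eq. }
  intros k Hk. rewrite Ht. split.
  - assert (HH : forall k, (k < n)%nat -> NTH (n * (n * (t / (n * n)))) k <= - m).
    { intros k' Hk'. unfold NTH. pose proof (H3 k' Hk'). unfold TH in H. lra. }
    pose proof (proj1 (decay n Hn eta Heta NTH sdn (t mod (n * n)) _ (- m) HH) k Hk).
    unfold NTH, TH in *. lra.
  - exact (proj1 (decay n Hn eta Heta TH sup (t mod (n * n)) _ M (fun k Hk => proj2 (H3 k Hk))) k Hk).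
Qed.

Lemma delta_bound t : delta n E zstar (sync_traj n E zobs eta z0 t) <= (1 - g) ^ (t / (n * n)) * (M0 - m0).
Proof.
  destruct (within t) as [M [m [H1 H2]]].
  assert (Hmm : m <= M) by (pose proof (H2 0%nat Hn); lra).
  eapply Rle_trans; [|apply H1].
  unfold delta. apply fold_max_le; [lra|].
  intros x Hx. apply in_flat_map in Hx as [j [Hj Hx]]. apply in_map_iff in Hx as [k [<- Hk]].
  apply in_vertices in Hj. destruct (nbrs_lt _ _ _ _ Hk) as [Hk' _].
  pose proof (dangle_th n E zstar Hzstar zobs z0 Hz0 c Hc eta m0 M0 Hm0 HM0 t j k (RA t) Hj Hk') as HD.
  unfold zt in HD. rewrite HD.
  pose proof (H2 j Hj). pose proof (H2 k Hk'). unfold TH in *. apply Rabs_le. lra.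
Qed.

Lemma geometric : exists K rho, 0 <= K /\ 0 <= rho < 1 /\
  forall t, delta n E zstar (sync_traj n E zobs eta z0 t) <= K * rho ^ t.
Proof.
  pose proof g_bounds as Hg.
  set (N := (n * n)%nat).
  assert (HN : 1 <= INR N) by (apply (le_INR 1); unfold N; nia).
  set (rho := 1 - g / INR N).
  assert (Hgn : 0 < g / INR N <= 1/2).
  { split; [apply Rdiv_lt_0_compat; lra|].
    apply Rle_trans with g; [|lra]. unfold Rdiv. rewrite <- (Rmult_1_r g) at 2.
    apply Rmult_le_compat_l; [lra|]. rewrite <- Rinv_1. apply Rinv_le_contravar; lra. }
  assert (Hrho : 0 < rho < 1) by (unfold rho; lra).
  assert (HB : 1 - g <= rho ^ N).
  { pose proof (bernoulli (g / INR N) N ltac:(lra)). unfold rho.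
    replace (INR N * (g / INR N)) with g in H by (field; lra). lra. }
  assert (HrN : 0 < rho ^ N) by (apply pow_lt; lra).
  assert (HD0 : 0 <= M0 - m0) by (pose proof (H0rng 0%nat Hn); lra).
  exists ((M0 - m0) / rho ^ N), rho. split; [apply Rdiv_le_0_compat; lra|]. split; [lra|].
  intros t. eapply Rle_trans; [apply delta_bound|]. fold N.
  set (p := (t / N)%nat). set (r := (t mod N)%nat).
  assert (Ht : t = (N * p + r)%nat) by (apply Nat.div_mod_eq).
  assert (Hr : (r < N)%nat) by (apply Nat.mod_upper_bound; unfold N; nia).
  assert (H1 : (1 - g) ^ p <= rho ^ (N * p)) by (rewrite pow_mult; apply pow_incr; lra).
  assert (H2 : rho ^ N <= rho ^ r).
  { replace N with (r + (N - r))%nat at 1 by lia. rewrite pow_add.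
    assert (0 <= rho ^ r) by (apply pow_le; lra).
    assert (rho ^ (N - r) <= 1) by (apply pow_le1; lra). nra. }
  assert (H3 : rho ^ (N * p) * rho ^ N <= rho ^ t).
  { rewrite Ht, pow_add. apply Rmult_le_compat_l; [apply pow_le; lra| auto]. }
  assert (0 <= (1 - g) ^ p) by (apply pow_le; lra).
  assert ((1 - g) ^ p * (M0 - m0) <= rho ^ (N * p) * (M0 - m0)) by (apply Rmult_le_compat_r; auto).
  apply Rle_trans with (rho ^ (N * p) * (M0 - m0)); auto.
  apply Rmult_le_reg_r with (rho ^ N); auto.
  unfold Rdiv. replace ((M0 - m0) * / rho ^ N * rho ^ t * rho ^ N) with ((M0 - m0) * rho ^ t) by (field; lra).
  nra.
Qed.
End Final.

Lemma init_bound e c : Cmod e = 1 -> Cmod c = 1 -> dangle c e < PI / 2 ->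
  - PI / 2 < arg (Cmult e (Cconj c)) < PI / 2.
Proof.
  intros He Hc Hd.
  assert (Hw : Cmod (Cmult e (Cconj c)) = 1) by (rewrite Cmod_mult, Cmod_conj, He, Hc; ring).
  destruct (arg_spec _ Hw) as [Ha Hw2]. set (a := arg (Cmult e (Cconj c))) in *.
  assert (Hce : Cmult c (Cconj e) = cis (- a)).
  { rewrite <- conj_cis, <- Hw2, Cmult_conj, Cconj_conj. ring. }
  unfold dangle in Hd. rewrite Hce in Hd. pose proof PI_RGT_0.
  destruct (Req_dec a PI) as [Ea|Ea].
  - exfalso. assert (cis (- a) = cis PI).
    { rewrite Ea. unfold cis. rewrite cos_neg, sin_neg, sin_PI. f_equal. ring. }
    rewrite H0, arg_cis in Hd by lra. rewrite Rabs_pos_eq in Hd; lra.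
  - rewrite arg_cis in Hd by lra. apply Rabs_def2 in Hd. lra.
Qed.

Lemma bounds_ex (f : nat -> R) B n : 0 < B -> (forall k, (k < n)%nat -> - B < f k < B) ->
  exists m M, - B < m /\ M < B /\ forall k, (k < n)%nat -> m <= f k <= M.
Proof.
  intros HB. induction n as [|n IH]; intros H.
  - exists 0, 0. split; [lra|split; [lra|]]. intros; lia.
  - destruct IH as [m [M [H1 [H2 H3]]]]; [intros; apply H; lia|].
    pose proof (H n ltac:(lia)).
    exists (Rmin m (f n)), (Rmax M (f n)). split; [apply Rmin_glb_lt; lra|].
    split; [apply Rmax_lub_lt; lra|].
    intros k Hk. destruct (Nat.eq_dec k n) as [->|Hkn].
    + split; [apply Rmin_r| apply Rmax_r].
    + pose proof (H3 k ltac:(lia)). split.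
      * eapply Rle_trans; [apply Rmin_l|lra].
      * eapply Rle_trans; [|apply Rmax_l]. lra.
Qed.

Theorem theorem3
  (n : nat) (E Eb : nat -> nat -> bool)
  (HE_range : forall j k, E j k = true -> (j < n)%nat /\ (k < n)%nat)
  (HE_sym : forall j k, E j k = E k j)
  (HE_irrefl : forall j, E j j = false)
  (HEb_sub : forall j k, Eb j k = true -> E j k = true)
  (HEb_sym : forall j k, Eb j k = Eb k j)
  (zstar : nat -> C) (Hzstar : forall j, (j < n)%nat -> Cmod (zstar j) = 1)
  (zobs : nat -> nat -> C)
  (Hzobs_unit : forall j k, E j k = true -> Cmod (zobs j k) = 1)
  (Hzobs_conj : forall j k, E j k = true -> zobs k j = Cconj (zobs j k))
  (Hgood : forall j k, E j k = true -> Eb j k = false ->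
             zobs j k = Cmult (zstar j) (Cconj (zstar k)))
  (Halpha : alpha0 n E Eb < 1/4)
  (z0 : nat -> C) (Hz0 : forall j, (j < n)%nat -> Cmod (z0 j) = 1)
  (Hinit : exists c : C, Cmod c = 1 /\
             forall j, (j < n)%nat -> dangle c (Cmult (Cconj (zstar j)) (z0 j)) < PI / 2)
  (Hcut : forall J : nat -> bool,
      (exists j, (j < n)%nat /\ J j = true) ->
      (2 * length (filter J (vertices n)) <= n)%nat ->
      exists j, (j < n)%nat /\ J j = true /\
        (length (filter (fun k => J k) (nbrs n E j))
         < length (filter (fun k => negb (J k)) (nbrs n E j)))%nat)
  (eta : R) (Heta : 0 < eta < 1) :
  is_lim_seq (fun t => delta n E zstar (sync_traj n E zobs eta z0 t)) 0
  /\
  ((forall j k, (j < n)%nat -> (k < n)%nat -> (E j k = true <-> j <> k)) ->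
   exists (K rho : R), 0 <= K /\ 0 <= rho < 1 /\
     forall t, delta n E zstar (sync_traj n E zobs eta z0 t) <= K * rho ^ t).
Proof.
  destruct (Nat.eq_dec n 0) as [->|Hn0].
  - assert (Hz : forall z, delta 0 E zstar z = 0) by (intros; reflexivity).
    split.
    + eapply is_lim_seq_ext; [intros t; symmetry; apply Hz|]. apply is_lim_seq_const.
    + intros _. exists 0, 0. split; [lra|split; [lra|]]. intros t. rewrite Hz. lra.
  - assert (Hn : (0 < n)%nat) by lia.
    destruct Hinit as [c [Hc Hi]].
    destruct (bounds_ex (th n E zstar zobs z0 c eta 0) (PI / 2) n) as [m0 [M0 [Hm0 [HM0 H0]]]].
    { pose proof PI_RGT_0; lra. }
    { intros k Hk. simpl th.
      enough (- PI / 2 < arg (Cmult (Cmult (Cconj (zstar k)) (z0 k)) (Cconj c)) < PI / 2) by lra.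
      apply init_bound; auto.
      rewrite Cmod_mult, Cmod_conj, Hzstar, Hz0; auto; ring. }
    assert (Hm0' : - PI / 2 < m0) by lra.
    assert (H0rng : Rng n E zstar zobs z0 c eta m0 M0 0) by exact H0.
    destruct (geometric n Hn E Eb HEb_sub zstar Hzstar zobs Hgood Halpha z0 Hz0 c Hc eta Heta
               m0 M0 Hm0' HM0 H0rng Hcut) as [K [rho [HK [Hr Hb]]]].
    split.
    + apply is_lim_seq_le_le with (u := fun _ => 0) (w := fun t => K * rho ^ t).
      * intros t. split; [apply fold_max_nonneg| apply Hb].
      * apply is_lim_seq_const.
      * assert (Hl : Rabs rho < 1) by (rewrite Rabs_pos_eq; lra).
        pose proof (is_lim_seq_scal_l _ K _ (is_lim_seq_geom rho Hl)) as HL.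
        simpl in HL. rewrite Rmult_0_r in HL. exact HL.
    + intros _. exists K, rho. auto.
Qed.
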